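(* Let $h\ge0$, let $z\in\mathcal{Q}\cap L^\infty$ and $q\in L^\infty$. Then $$\big(\mathcal{F}_h'(z)[q]\big)^2\le|\Omega|\,\nu\,\mathcal{F}_h''(z)[q^2].$$
   Context: $\Omega\subset\mathbb{R}^d$ bounded open domain, $|\Omega|$ its measure. $Q=\{(q,s)\in\mathbb{R}^d\times\mathbb{R}:s\ge\Lambda(q)\}$ with $\Lambda$ convex continuous, and $\mathcal{Q}$ the set of functions with values in $Q$ (at which $F$ is finite). $F$ is a $\nu$-self-concordant barrier for $Q$: $|F'''(z)[u^3]|\le2(F''(z)[u^2])^{3/2}$ and $|F'(z)[u]|\le\sqrt\nu(F''(z)[u^2])^{1/2}$. For $h>0$, $\int_\Omega^{(h)}\eta=\sum_{K\in T_h}\sum_k\omega_{K,k}\eta|_K(x_{K,k})$ is a quadrature rule on a triangulation $T_h$ of $\Omega$ with positive weights, integrating constants exactly; $\int^{(0)}$ is the exact integral. $\mathcal{F}_h(w)=\int_\Omega^{(h)}F(w(x))$, with derivatives $\mathcal{F}_h'(z)[q]=\int_\Omega^{(h)}F'(z)[q]$, $\mathcal{F}_h''(z)[q^2]=\int_\Omega^{(h)}F''(z)[q^2]$. *)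

(* Defs.v *)
From HB Require Import structures.
From mathcomp Require Import all_boot all_order all_algebra.
From mathcomp Require Import all_classical all_reals all_analysis.
Set Implicit Arguments. Unset Strict Implicit. Unset Printing Implicit Defensive.
Import Order.TTheory GRing.Theory Num.Theory.
Import numFieldNormedType.Exports.
Local Open Scope classical_set_scope.
Local Open Scope ring_scope.

Definition Vsp (R : realType) (d : nat) := ('rV[R]_d * R)%type.

Definition epiQ (R : realType) (d : nat) (Lam : 'rV[R]_d -> R) : set (Vsp R d) :=
  [set p | Lam p.1 <= p.2].

Definition convex_fun (R : realType) (d : nat) (Lam : 'rV[R]_d -> R) :=
  forall (a b : 'rV[R]_d) (t : R), 0 <= t <= 1 ->
    Lam (t *: a + (1 - t) *: b) <= t * Lam a + (1 - t) * Lam b.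

Definition dF (R : realType) (d : nat) (F : Vsp R d -> R) (z u : Vsp R d) : R :=
  derive F z u.
Definition d2F (R : realType) (d : nat) (F : Vsp R d -> R) (z u : Vsp R d) : R :=
  derive (fun w => derive F w u) z u.
Definition d3F (R : realType) (d : nat) (F : Vsp R d -> R) (z u : Vsp R d) : R :=
  derive (fun w => derive (fun w' => derive F w' u) w u) z u.

Definition sc_barrier (R : realType) (d : nat) (Q : set (Vsp R d))
    (F : Vsp R d -> R) (nu : R) : Prop :=
  let D := interior Q in
  [/\ (forall z u, D z ->
        [/\ derivable F z u,
            derivable (fun w => derive F w u) z u &
            derivable (fun w => derive (fun w' => derive F w' u) w u) z u]),
      (forall z u, D z ->
        [/\ {for (z, u), continuous (fun p : Vsp R d * Vsp R d => dF F p.1 p.2)},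
            {for (z, u), continuous (fun p : Vsp R d * Vsp R d => d2F F p.1 p.2)} &
            {for (z, u), continuous (fun p : Vsp R d * Vsp R d => d3F F p.1 p.2)}]),
      (forall z u, D z -> 0 <= d2F F z u) /\
      (forall x, closure D x -> ~ D x ->
         F @ within D (nbhs x) --> +oo),
      (forall z u, D z -> `|d3F F z u| <= 2 * powR (d2F F z u) (3 / 2)) &
      (forall z u, D z -> `|dF F z u| <= Num.sqrt nu * Num.sqrt (d2F F z u))].

Record quad_rule (R : realType) (dT : measure_display) (T : measurableType dT)
    (mu : {measure set T -> \bar R}) (Om : set T) := QuadRule {
  q_idx : finType;
  q_w : q_idx -> R;
  q_x : q_idx -> T;
  q_w_pos : forall i, 0 < q_w i;
  q_x_in : forall i, Om (q_x i);
  q_const : ((\sum_i q_w i)%:E = mu Om)%E }.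

Definition quad_int (R : realType) (dT : measure_display) (T : measurableType dT)
    (mu : {measure set T -> \bar R}) (Om : set T) (qr : quad_rule mu Om)
    (eta : T -> R) : R :=
  \sum_(i : q_idx qr) q_w i * eta (q_x i).

Definition int_h (R : realType) (dT : measure_display) (T : measurableType dT)
    (mu : {measure set T -> \bar R}) (Om : set T) (qr : R -> quad_rule mu Om)
    (h : R) (eta : T -> R) : \bar R :=
  if h == 0 then (\int[mu]_(x in Om) (eta x)%:E)%E
  else (quad_int (qr h) eta)%:E.

Definition Linf (R : realType) (dT : measure_display) (T : measurableType dT)
    (mu : {measure set T -> \bar R}) (Om : set T) (d : nat) (f : T -> Vsp R d) :=
  [/\ (forall i : 'I_d, measurable_fun Om (fun x => (f x).1 ord0 i)),
      measurable_fun Om (fun x => (f x).2) &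
      exists M : R, {ae mu, forall x, Om x -> `|f x| <= M}].

Definition Fh1 (R : realType) (dT : measure_display) (T : measurableType dT)
    (mu : {measure set T -> \bar R}) (Om : set T) (qr : R -> quad_rule mu Om)
    (d : nat) (F : Vsp R d -> R) (h : R) (z q : T -> Vsp R d) : \bar R :=
  int_h qr h (fun x => dF F (z x) (q x)).
Definition Fh2 (R : realType) (dT : measure_display) (T : measurableType dT)
    (mu : {measure set T -> \bar R}) (Om : set T) (qr : R -> quad_rule mu Om)
    (d : nat) (F : Vsp R d -> R) (h : R) (z q : T -> Vsp R d) : \bar R :=
  int_h qr h (fun x => d2F F (z x) (q x)).

(* Main.v *)
Require Import Defs.
From HB Require Import structures.
From mathcomp Require Import all_boot all_order all_algebra.
From mathcomp Require Import all_classical all_reals all_analysis.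
From mathcomp Require Import ring lra measurable_realfun.
Import Order.TTheory GRing.Theory Num.Theory.
Import numFieldNormedType.Exports.
Local Open Scope classical_set_scope.
Local Open Scope ring_scope.

Section Meas.
Variables (R : realType) (dT : measure_display) (T : measurableType dT).
Variables (Om : set T) (mOm : measurable Om) (d : nat).

Definition coord_meas (f : T -> Vsp R d) :=
  (forall i : 'I_d, measurable_fun Om (fun x => (f x).1 ord0 i)) /\
  measurable_fun Om (fun x => (f x).2).

Lemma ball_meas (f : T -> Vsp R d) (c : Vsp R d) (r : R) :
  coord_meas f -> measurable (Om `&` [set x | ball c r (f x)]).
Proof.
move=> [m1 m2].
have -> : Om `&` [set x | ball c r (f x)] =
  (\bigcap_(j in [set: 'I_d]) (Om `&` (fun x => (f x).1 ord0 j) @^-1` `]c.1 ord0 j - r, c.1 ord0 j + r[))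
  `&` (Om `&` (fun x => (f x).2) @^-1` `]c.2 - r, c.2 + r[) `&` [set _ | 0 < r].
  apply/seteqP; split => x /=.
    move=> [Ox [[r0 H1] H2]]; split; [split|] => //; last first.
      by split => //; move: H2; rewrite ball_itv.
    by move=> j _; split => //; move: (H1 ord0 j); rewrite ball_itv.
  move=> [[H1 [Ox H2]] r0]; split => //; split; last by rewrite ball_itv.
  split => // i j; rewrite (ord1 i).
  by have [_ ] := H1 j I; rewrite ball_itv.
apply: measurableI; last first.
  by case: (pselect (0 < r)) => h; [rewrite (_ : [set _ | _] = setT) //; apply/seteqP; split|
    rewrite (_ : [set _ | _] = set0) //; apply/seteqP; split].
apply: measurableI.
  apply: fin_bigcap_measurable; first exact: finite_finset.
  by move=> j _; apply: m1 => //; exact: measurable_itv.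
by apply: m2 => //; exact: measurable_itv.
Qed.


Definition KK := ((('rV[rat]_d * rat) * ('rV[rat]_d * rat)) * rat)%type.
Definition cenV (c : 'rV[rat]_d * rat) : Vsp R d := (map_mx ratr c.1, ratr c.2).
Definition box (k : KK) : set (Vsp R d * Vsp R d) :=
  ball (cenV k.1.1, cenV k.1.2) (ratr k.2).

Lemma rat_approx (y r : R) : 0 < r -> exists qq : rat, ball y r (ratr qq).
Proof.
move=> r0; have [|qq] := @rat_in_itvoo R (y - r) (y + r); first by lra.
by exists qq; rewrite ball_itv.
Qed.

Lemma rat_approxV (p : Vsp R d) (r : R) : 0 < r -> exists c, ball p r (cenV c).
Proof.
move=> r0.
have /choice [g Hg] : forall ij : 'I_1 * 'I_d, exists qq : rat,
    ball (p.1 ij.1 ij.2) r (ratr qq) by move=> ij; exact: rat_approx.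
have [q2 Hq2] := @rat_approx p.2 r r0.

exists (\matrix_(i, j) g (i, j), q2); split => //=.
split => // i j; rewrite !mxE. exact: (Hg (i, j)).
Qed.

Lemma open_meas (z q : T -> Vsp R d) (W : set (Vsp R d * Vsp R d)) :
  coord_meas z -> coord_meas q ->
  (forall p, W p -> exists2 e, 0 < e & ball p e `<=` W) ->
  measurable (Om `&` (fun x => (z x, q x)) @^-1` W).
Proof.
move=> mz mq HW.
pose S (n : nat) : set T := if @unpickle KK n is Some k then
  (if `[< box k `<=` W >] then Om `&` (fun x => (z x, q x)) @^-1` box k else set0)
  else set0.
have -> : Om `&` (fun x => (z x, q x)) @^-1` W = \bigcup_n S n.
  apply/seteqP; split => x /=.
    move=> [Ox Wx]; have [e e0 He] := HW _ Wx.
    have [r] : exists r : rat, ratr r \in `]0, e / 2[.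
      by apply: rat_in_itvoo; rewrite divr_gt0.
    rewrite in_itv /= => /andP[r0 r1].
    have [c1 Hc1] := @rat_approxV (z x) _ r0.
    have [c2 Hc2] := @rat_approxV (q x) _ r0.
    exists (pickle ((c1, c2), r) : nat); first by [].
    rewrite /S pickleK; case: asboolP => [_|].
      by split; [exact: Ox | split; apply: ball_sym; [exact: Hc1 | exact: Hc2]].
    case; move=> y /= [B1 B2]; apply: He; apply: (@le_ball _ _ _ (ratr r + ratr r)).
      by lra.
    by split; [apply: ball_triangle B1 | apply: ball_triangle B2].
  move=> [n _]; rewrite /S; case: (unpickle n) => // k.
  by case: asboolP => // H [Ox Bx]; split => //; exact: H.
apply: bigcupT_measurable => n; rewrite /S; case: (unpickle n) => // k.
case: asboolP => // _.
have -> : Om `&` (fun x => (z x, q x)) @^-1` box k =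
   (Om `&` [set x | ball (cenV k.1.1) (ratr k.2) (z x)]) `&`
   (Om `&` [set x | ball (cenV k.1.2) (ratr k.2) (q x)]).
  by apply/seteqP; split => x /=; [move=> [? [? ?]] | move=> [[? ?] [? ?]]].
by apply: measurableI; apply: ball_meas.
Qed.

Lemma comp_meas (z q : T -> Vsp R d) (D : set (Vsp R d)) (Phi : Vsp R d -> Vsp R d -> R) :
  coord_meas z -> coord_meas q -> open D -> (forall x, Om x -> D (z x)) ->
  (forall w u, D w -> {for (w, u), continuous (fun p : Vsp R d * Vsp R d => Phi p.1 p.2)}) ->
  measurable_fun Om (fun x => Phi (z x) (q x)).
Proof.
move=> mz mq oD zD cP.
apply: (measurability _ (measurable_realfun.RGenOpens.measurableE R)).
move=> _ [_ [a [b ->]] <-].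
pose W := [set p : Vsp R d * Vsp R d | D p.1 /\ `]a, b[%classic (Phi p.1 p.2)].
have -> : Om `&` (fun x => Phi (z x) (q x)) @^-1` `]a, b[%classic =
    Om `&` (fun x => (z x, q x)) @^-1` W.
  apply/seteqP; split => x /=; first by move=> [Ox H]; split => //; split => //; exact: zD.
  by move=> [Ox [_ H]].
apply: open_meas => // p [Dp Hp].
have : nbhs p W.
  apply: filterI.
    have : nbhs p.1 D by exact: (open_nbhs_nbhs (conj oD Dp)).
    move=> /nbhs_ballP [e e0 He]; apply/nbhs_ballP; exists e => //.
    by move=> y [B1 _]; exact: He.
  have := cP p.1 p.2 Dp; rewrite -surjective_pairing => cp.
  apply: cp; apply: open_nbhs_nbhs; split => //; exact: itv_open.
by move=> /nbhs_ballP [e e0 He]; exists e.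
Qed.

End Meas.

Section RL.
Variable R : realType.

Lemma key_real (X A M : R) : 0 <= X -> 0 <= A -> 0 <= M ->
  (forall t, 0 < t -> 2 * X <= t * A + M / t) -> X ^+ 2 <= M * A.
Proof.
move=> X0 A0 M0 H; rewrite leNgt; apply/negP => HX.
have Xp : 0 < X.
  rewrite lt_neqAle X0 andbT; apply/negP => /eqP X0'.
  by move: HX; rewrite -X0' expr0n /= ltNge mulr_ge0.
have [Ap|] := ltP 0 A.
  have := H (X / A) (divr_gt0 Xp Ap).
  rewrite divfK ?gt_eqF // => h.
  have h2 : X <= M / (X / A) by lra.
  move: h2; rewrite invf_div mulrA ler_pdivlMr // => h3.
  by move: HX; rewrite ltNge expr2 h3.
rewrite le_eqVlt ltNge A0 orbF => /eqP A0'; rewrite A0' in H HX.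
have [Mp|] := ltP 0 M.
  have := H (M / X) (divr_gt0 Mp Xp).
  rewrite mulr0 add0r invf_div mulrCA divff ?gt_eqF // mulr1; lra.
rewrite le_eqVlt ltNge M0 orbF => /eqP M0'; rewrite M0' in H.
have := H 1 ltr01; lra.
Qed.

Lemma amgm (c t : R) : 0 <= c -> 0 < t -> 2 * Num.sqrt c <= t * c + 1 / t.
Proof.
move=> c0 t0.
have hc : c = Num.sqrt c ^+ 2 by rewrite sqr_sqrtr.
set s := Num.sqrt c in hc *; rewrite hc.
rewrite -subr_ge0.
have -> : t * s ^+ 2 + 1 / t - 2 * s = (t * s - 1) ^+ 2 / t.
  by field; rewrite gt_eqF.
by rewrite divr_ge0 // ?sqr_ge0 // ltW.
Qed.

Lemma pt_bound (a b nu t : R) : 0 <= nu -> 0 <= b -> 0 < t ->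
  `|a| <= Num.sqrt nu * Num.sqrt b -> 2 * `|a| <= t * (nu * b) + 1 / t.
Proof.
move=> n0 b0 t0 h; rewrite -sqrtrM // in h.
have := @amgm (nu * b) t (mulr_ge0 n0 b0) t0; lra.
Qed.

Lemma quad_ineq (I : finType) (w a b : I -> R) (nu : R) :
  (forall i, 0 < w i) -> 0 <= nu -> (forall i, 0 <= b i) ->
  (forall i, `|a i| <= Num.sqrt nu * Num.sqrt (b i)) ->
  (\sum_i w i * a i) ^+ 2 <= (\sum_i w i) * (nu * \sum_i w i * b i).
Proof.
move=> w0 n0 b0 hab.
set X := \sum_i w i * `|a i|.
have hX : `|\sum_i w i * a i| <= X.
  apply: le_trans (ler_norm_sum _ _ _) _; apply: ler_sum => i _.
  by rewrite normrM gtr0_norm.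
have X0 : 0 <= X by apply: sumr_ge0 => i _; rewrite mulr_ge0 // ltW.
have : X ^+ 2 <= (\sum_i w i) * (nu * \sum_i w i * b i).
  apply: key_real => //.
  - by rewrite mulr_ge0 // sumr_ge0 // => i _; rewrite mulr_ge0 // ltW.
  - by rewrite sumr_ge0 // => i _; rewrite ltW.
  move=> t t0; rewrite /X mulr_sumr.
  have -> : t * (nu * \sum_i w i * b i) + (\sum_i w i) / t =
     \sum_i w i * (t * (nu * b i) + 1 / t).
    rewrite mulr_sumr mulr_sumr mulr_suml -big_split /=; apply: eq_bigr => i _.
    by field; rewrite gt_eqF.
  apply: ler_sum => i _; rewrite mulrCA; apply: ler_wpM2l; first exact: ltW.
  exact: pt_bound.
apply: le_trans; rewrite -real_normK ?num_real //.
by apply: lerXn2r; rewrite ?nnegrE // normr_ge0.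
Qed.
End RL.

Section IntIneq.
Local Open Scope ereal_scope.
Variables (R : realType) (dT : measure_display) (T : measurableType dT).
Variables (mu : {measure set T -> \bar R}) (Om : set T).

Lemma int_ineq (a b : T -> R) (nu : R) :
  measurable Om -> mu Om < +oo -> (0 <= nu)%R ->
  measurable_fun Om a -> measurable_fun Om b ->
  (forall x, Om x -> 0 <= b x)%R ->
  (forall x, Om x -> `|a x| <= Num.sqrt nu * Num.sqrt (b x))%R ->
  (\int[mu]_(x in Om) (a x)%:E) * (\int[mu]_(x in Om) (a x)%:E) <=
    mu Om * nu%:E * \int[mu]_(x in Om) (b x)%:E.
Proof.
move=> mOm muf n0 ma mb b0 hab.
have mOm0 : 0 <= mu Om by [].
have /fineK muE : mu Om \is a fin_num by rewrite ge0_fin_numE.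
set M := fine (mu Om) in muE; rewrite -muE.
have M0 : (0 <= M)%R by rewrite -lee_fin muE.
have mEa : measurable_fun Om (EFin \o a : T -> \bar R) by exact/measurable_EFinP.
have mEb : measurable_fun Om (EFin \o b : T -> \bar R) by exact/measurable_EFinP.
have B0 : 0 <= \int[mu]_(x in Om) (b x)%:E.
  by apply: integral_ge0 => x Ox; rewrite lee_fin b0.
have Ha0 : (nu = 0)%R \/ (M = 0)%R -> \int[mu]_(x in Om) (a x)%:E = 0.
  case=> [nu0|M0'].
    rewrite (eq_integral (fun=> 0)) ?integral0 // => x /set_mem Ox.
    have := hab x Ox; rewrite nu0 sqrtr0 mul0r normr_le0 => /eqP ->//.
  apply: null_set_integral => //; rewrite -muE M0' //.
case: (eqVneq (\int[mu]_(x in Om) (b x)%:E) +oo) => [Binf|Bfin].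
  have [nu0|nup] := eqVneq nu 0%R.
    by rewrite Ha0; [rewrite mule0 mule_ge0 // mule_ge0 // lee_fin|left].
  have [M0'|Mp] := eqVneq M 0%R.
    by rewrite Ha0; [rewrite mule0 mule_ge0 // mule_ge0 // lee_fin|right].
  rewrite Binf -EFinM mulry gtr0_sg ?mul1e ?leey // mulr_gt0 // lt_neqAle eq_sym ?Mp ?nup //.
have /fineK BE : \int[mu]_(x in Om) (b x)%:E \is a fin_num.
  by rewrite ge0_fin_numE // ltey.
set Bb := fine _ in BE; rewrite -BE.
have Bb0 : (0 <= Bb)%R by rewrite -lee_fin BE.
have HA : forall t, (0 < t)%R ->
    \int[mu]_(x in Om) `|(a x)%:E| <= ((t * (nu * Bb) + M / t) / 2)%:E.
  move=> t t0.
  have -> : \int[mu]_(x in Om) `|(a x)%:E| = \int[mu]_(x in Om) (`|a x|)%:E.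
    by apply: eq_integral => x _; rewrite abse_EFin.
  apply: (@le_trans _ _ (\int[mu]_(x in Om) ((t * nu / 2) * b x + 1 / (2 * t))%:E)).
    apply: ge0_le_integral => //.
    - apply/measurable_EFinP; apply: measurableT_comp => //; exact: normr_measurable.
    - apply/measurable_EFinP; apply: measurable_funD => //.
      by apply: measurable_funM => //.
    - move=> x Ox; rewrite lee_fin.
      have := @pt_bound R (a x) (b x) nu t n0 (b0 x Ox) t0 (hab x Ox).
      have -> : ((t * nu / 2) * b x + 1 / (2 * t) = (t * (nu * b x) + 1 / t) / 2)%R.
        by field; rewrite gt_eqF.
      lra.
  under eq_integral do rewrite EFinD.
  rewrite ge0_integralD //; last 3 first.
  - by move=> x Ox; rewrite lee_fin mulr_ge0 // ?b0 // divr_ge0 // mulr_ge0 // ltW.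
  - by apply/measurable_EFinP; apply: measurable_funM.
  - by move=> x _; rewrite lee_fin divr_ge0 // mulr_ge0 // ltW.
  under eq_integral do rewrite EFinM.
  rewrite ge0_integralZl_EFin //; last first.
    by rewrite divr_ge0 // mulr_ge0 // ltW.
  rewrite integral_cst // -BE -muE -!EFinM -EFinD lee_fin.
  rewrite le_eqVlt; apply/orP; left; apply/eqP; field; rewrite gt_eqF //.
have X0 : 0 <= \int[mu]_(x in Om) `|(a x)%:E| by apply: integral_ge0.
have /fineK XE : \int[mu]_(x in Om) `|(a x)%:E| \is a fin_num.
  rewrite ge0_fin_numE //; apply: le_lt_trans (HA 1%R ltr01) _; exact: ltey.
set X := fine _ in XE.
have hA : `|\int[mu]_(x in Om) (a x)%:E| <= \int[mu]_(x in Om) `|(a x)%:E|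
  := le_abse_integral mu mOm mEa.
have Yfin : \int[mu]_(x in Om) (a x)%:E \is a fin_num.
  rewrite -abse_fin_num ge0_fin_numE //.
  by apply: le_lt_trans hA _; rewrite -XE ltey.
have /fineK YE := Yfin.
set Y := fine _ in YE.
have {}hA : (`|Y| <= X)%R by rewrite -lee_fin -abse_EFin YE XE.
rewrite -YE -!EFinM lee_fin.
have X0' : (0 <= X)%R by rewrite -lee_fin XE.
have : (X ^+ 2 <= M * (nu * Bb))%R.
  apply: key_real => //; first by rewrite mulr_ge0.
  move=> t t0; have := HA t t0; rewrite -XE lee_fin; lra.
rewrite mulrA => h; apply: le_trans h.
rewrite -expr2 -real_normK ?num_real //.
by apply: lerXn2r; rewrite ?nnegrE // normr_ge0.
Qed.
End IntIneq.


Lemma int_h0 (R : realType) (dT : measure_display) (T : measurableType dT)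
    (mu : {measure set T -> \bar R}) (Om : set T) (qr : R -> quad_rule mu Om)
    (h : R) (eta : T -> R) :
  (forall x, Om x -> eta x = 0) -> int_h qr h eta = 0%E.
Proof.
move=> H; rewrite /int_h; case: ifP => _.
  by rewrite (eq_integral (fun=> 0%E)) ?integral0 // => x /set_mem Ox; rewrite H.
by rewrite /quad_int big1 // => i _; rewrite H ?mulr0 //; exact: q_x_in.
Qed.

Theorem mainTheorem4 (R : realType) (dT : measure_display) (T : measurableType dT)
    (mu : {measure set T -> \bar R}) (Om : set T) (d : nat)
    (Lam : 'rV[R]_d -> R) (F : Vsp R d -> R) (nu : R)
    (qr : R -> quad_rule mu Om) (h : R) (z q : T -> Vsp R d) :
  measurable Om -> (mu Om < +oo)%E ->
  convex_fun Lam -> continuous Lam ->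
  sc_barrier (epiQ Lam) F nu ->
  0 <= h ->
  {in Om, forall x, interior (epiQ Lam) (z x)} -> Linf mu Om z ->
  Linf mu Om q ->
  (Fh1 qr F h z q * Fh1 qr F h z q <= mu Om * nu%:E * Fh2 qr F h z q)%E.
Proof.
move=> mOm muf cvx cLam sc h0 zin Lz Lq.
move: sc; rewrite /sc_barrier.
set D := interior (epiQ Lam).
move=> [Hder Hcont [Hd2 _] _ HdF].
have oD : open D by exact: open_interior.
have zD : forall x, Om x -> D (z x) by move=> x Ox; exact: zin x (mem_set Ox).
pose a := fun x => dF F (z x) (q x).
pose b := fun x => d2F F (z x) (q x).
have Hb : forall x, Om x -> 0 <= b x by move=> x Ox; exact: Hd2 _ _ (zD x Ox).
have Hab : forall x, Om x -> `|a x| <= Num.sqrt nu * Num.sqrt (b x).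
  by move=> x Ox; exact: HdF _ _ (zD x Ox).
change (int_h qr h a * int_h qr h a <= mu Om * nu%:E * int_h qr h b)%E.
have [nun|nup] := ltP nu 0.
  have Hab0 : forall x, Om x -> a x = 0 /\ b x = 0.
    move=> x Ox; split.
      have := Hab x Ox; rewrite ler0_sqrtr; last exact: ltW.
      by rewrite mul0r normr_le0 => /eqP.
    rewrite /b /d2F.
    have -> : derive (fun w => derive F w (q x)) (z x) (q x) =
        derive (cst (0:R)) (z x) (q x); last by rewrite derive_cst.
    apply: near_eq_derive.
    have : nbhs (z x) D by apply: open_nbhs_nbhs; split => //; exact: zD.
    apply: filterS => w Dw /=; have := HdF w (q x) Dw.
    rewrite ler0_sqrtr; last exact: ltW.
    by rewrite mul0r normr_le0 => /eqP.
  rewrite (@int_h0 _ _ _ _ _ _ _ a); last by move=> x Ox; case: (Hab0 x Ox).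
  rewrite (@int_h0 _ _ _ _ _ _ _ b); last by move=> x Ox; case: (Hab0 x Ox).
  by rewrite !mule0.
have cz : @coord_meas R dT T Om d z by case: Lz.
have cq : @coord_meas R dT T Om d q by case: Lq.
rewrite /int_h; case: ifP => _.
  apply: int_ineq => //.
  - apply: (@comp_meas R dT T Om mOm d z q D (dF F) cz cq oD zD) => w u Dw.
    by case: (Hcont w u Dw) => H _ _; exact: H.
  - apply: (@comp_meas R dT T Om mOm d z q D (d2F F) cz cq oD zD) => w u Dw.
    by case: (Hcont w u Dw) => _ H _; exact: H.
rewrite -(q_const (qr h)) -!EFinM lee_fin -expr2 -mulrA.
apply: quad_ineq => //; first exact: q_w_pos.
- by move=> i; apply: Hb; exact: q_x_in.
- by move=> i; apply: Hab; exact: q_x_in.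
Qed.
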